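(* Let $V_0,V_1,\dots,V_k$ be smooth vector fields on $\mathbb{R}^k$, $L=\sum_{i=1}^kV_i^2+V_0$, and let $\sigma=(\sigma_1,\dots,\sigma_k):\mathbb{R}^k\to\mathbb{R}^k$ be a $C^1$ map with \[C_\sigma:=\sup_{p\in\mathbb{R}^k}\Big(\sum_{i,j=1}^k(V_i\sigma_j(p))^2\Big)^{1/2}<\infty .\] On functions $f(p,\xi)$, $p,\xi\in\mathbb{R}^k$, let $\mathcal{L}=L+\sum_{i=1}^k\sigma_i(p)\frac{\partial}{\partial\xi_i}$ (with $L$ acting in $p$). Define $\Gamma(f)=\frac12(\mathcal{L}f^2-2f\mathcal{L}f)$, $\Gamma_2(f)=\frac12(\mathcal{L}\Gamma(f)-2\Gamma(f,\mathcal{L}f))$, $\Gamma^L(f)=\frac12(Lf^2-2fLf)$, $\Gamma_2^L(f)=\frac12(L\Gamma^L(f)-2\Gamma^L(f,Lf))$, $\Gamma^Z(f)=\|\nabla_\xi f\|^2$ and $\Gamma_2^Z(f)=\frac12(\mathcal{L}\Gamma^Z(f)-2\Gamma^Z(f,\mathcal{L}f))$, bilinear versions being obtained by polarization. If for some $\rho\in\mathbb{R}$ we have $\Gamma_2^L(f)\ge\rho\,\Gamma^L(f)$ for all smooth $f$, then for every $f\in C^\infty(\mathbb{R}^k\times\mathbb{R}^k)$, \[\Gamma_2(f)\ge\Big(\rho-\frac{C_\sigma}{2}\Big)\Gamma(f)-\frac{C_\sigma}{2}\Gamma^Z(f),\qquad\Gamma_2^Z(f)\ge0 .\]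
   Context: $\nabla_\xi$ denotes the Euclidean gradient in the variable $\xi\in\mathbb{R}^k$ and $\|\cdot\|$ the Euclidean norm. *)

(* Defs.v *)
From HB Require Import structures.
From mathcomp Require Import all_boot all_order all_algebra.
From mathcomp Require Import all_classical all_reals all_analysis.
Set Implicit Arguments. Unset Strict Implicit. Unset Printing Implicit Defensive.
Import Order.TTheory GRing.Theory Num.Theory.
Import numFieldNormedType.Exports.
Local Open Scope classical_set_scope.
Local Open Scope ring_scope.

Section Defs.
Variable R : realType.

Fixpoint iterD {E : normedModType R} (vs : seq E) (f : E -> R) : E -> R :=
  match vs with
  | [::] => f
  | v :: vs' => fun x => 'D_v (iterD vs' f) x
  end.

Definition smooth {E : normedModType R} (f : E -> R) : Prop :=
  forall (vs : seq E) (x : E), differentiable (iterD vs f) x.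

Definition C1 {E : normedModType R} (f : E -> R) : Prop :=
  (forall x, differentiable f x) /\ (forall v : E, continuous ('D_v f)).

Variable k : nat.
Local Notation vec := 'rV[R]_k.

Definition comp (X : vec -> vec) (j : 'I_k) : vec -> R := fun p => X p 0 j.
Definition smooth_vf (X : vec -> vec) : Prop := forall j, smooth (comp X j).
Definition C1_map (X : vec -> vec) : Prop := forall j, C1 (comp X j).

Definition vf_act (X : vec -> vec) (g : vec -> R) : vec -> R :=
  fun p => 'D_(X p) g p.

Variables (V0 : vec -> vec) (V : 'I_k -> vec -> vec) (sigma : vec -> vec).

Definition Lop (g : vec -> R) : vec -> R :=
  fun p => \sum_(i < k) vf_act (V i) (vf_act (V i) g) p + vf_act V0 g p.

Definition GammaL (f : vec -> R) : vec -> R :=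
  fun p => 2^-1 * (Lop (fun q => f q * f q) p - 2 * f p * Lop f p).
Definition GammaLB (f g : vec -> R) : vec -> R :=
  fun p => 4^-1 * (GammaL (fun q => f q + g q) p - GammaL (fun q => f q - g q) p).
Definition Gamma2L (f : vec -> R) : vec -> R :=
  fun p => 2^-1 * (Lop (GammaL f) p - 2 * GammaLB f (Lop f) p).

Definition sigma_norm (p : vec) : R :=
  Num.sqrt (\sum_(i < k) \sum_(j < k) (vf_act (V i) (comp sigma j) p) ^+ 2).
Definition Csigma : R := sup (range sigma_norm).

Local Notation pvec := (vec * vec)%type.

Definition pact (X : vec -> vec) (g : pvec -> R) : pvec -> R :=
  fun z => 'D_((X z.1, 0) : pvec) g z.
Definition Zsig (g : pvec -> R) : pvec -> R :=
  fun z => 'D_(((0 : vec), sigma z.1) : pvec) g z.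
Definition dxi (i : 'I_k) (g : pvec -> R) : pvec -> R :=
  fun z => 'D_(((0 : vec), (delta_mx 0 i : vec)) : pvec) g z.

Definition calL (g : pvec -> R) : pvec -> R :=
  fun z => \sum_(i < k) pact (V i) (pact (V i) g) z + pact V0 g z + Zsig g z.

Definition Gamma (f : pvec -> R) : pvec -> R :=
  fun z => 2^-1 * (calL (fun w => f w * f w) z - 2 * f z * calL f z).
(* bilinear carre du champ of script L *)
Definition GammaB (f g : pvec -> R) : pvec -> R :=
  fun z => \sum_(i < k) pact (V i) f z * pact (V i) g z.
Definition Gamma2 (f : pvec -> R) : pvec -> R :=
  fun z => 2^-1 * (calL (Gamma f) z - 2 * GammaB f (calL f) z).

Definition GammaZB (f g : pvec -> R) : pvec -> R :=
  fun z => \sum_(i < k) dxi i f z * dxi i g z.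
Definition GammaZ (f : pvec -> R) : pvec -> R := GammaZB f f.
Definition Gamma2Z (f : pvec -> R) : pvec -> R :=
  fun z => 2^-1 * (calL (GammaZ f) z - 2 * GammaZB f (calL f) z).

End Defs.

(* Main.v *)
Require Import Defs.
From HB Require Import structures.
From mathcomp Require Import all_boot all_order all_algebra.
From mathcomp Require Import all_classical all_reals all_analysis.
From mathcomp Require Import ring lra.
Import Order.TTheory GRing.Theory Num.Theory.
Import numFieldNormedType.Exports.
Local Open Scope classical_set_scope.
Local Open Scope ring_scope.

Set Implicit Arguments. Unset Strict Implicit. Unset Printing Implicit Defensive.

Module P1.
Section Gen.
Variables (R : realType) (E F : normedModType R).

Lemma iterD_cat (vs ws : seq E) (h : E -> R) :
  Defs.iterD (cat vs ws) h = Defs.iterD vs (Defs.iterD ws h).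
Proof. by elim: vs => //= v vs ->. Qed.

Lemma smoothD1 (h : E -> R) v : smooth h -> smooth ('D_v h).
Proof.
move=> sh vs x; have := sh (cat vs [:: v]) x; by rewrite iterD_cat.
Qed.

Lemma smooth_diff (h : E -> R) x : smooth h -> differentiable h x.
Proof. by move=> sh; exact: (sh [::] x). Qed.

Inductive alg : (E -> R) -> Prop :=
| alg_base h : smooth h -> alg h
| alg_add p q : alg p -> alg q -> alg (p + q)
| alg_mul p q : alg p -> alg q -> alg (p * q).

Lemma alg_diff p : alg p -> forall x, differentiable p x.
Proof.
elim=> [h sh x| p1 q _ dp _ dq x| p1 q _ dp _ dq x].
- exact: smooth_diff.
- exact: differentiableD.
- exact: differentiableM.
Qed.

Lemma alg_D p v : alg p -> alg ('D_v p).
Proof.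
elim => [h sh|p1 q ap Hp aq Hq|p1 q ap Hp aq Hq].
- by apply: alg_base; apply: smoothD1.
- have -> : 'D_v (p1 + q) = 'D_v p1 + 'D_v q.
    apply/funext => x /=; rewrite deriveD //; exact: diff_derivable (alg_diff _ _).
  exact: alg_add.
- have -> : 'D_v (p1 * q) = p1 * 'D_v q + q * 'D_v p1.
    apply/funext => x /=; rewrite deriveM //; exact: diff_derivable (alg_diff _ _).
  by apply: alg_add; apply: alg_mul.
Qed.

Lemma alg_smooth p : alg p -> smooth p.
Proof.
move=> ap vs; suff : alg (Defs.iterD vs p) by move=> a x; exact: alg_diff.
elim: vs => //= v vs IH.
exact: (alg_D v IH).
Qed.

Lemma smoothD_ (a b : E -> R) : smooth a -> smooth b -> smooth (a + b).
Proof. by move=> sa sb; apply/alg_smooth/alg_add; apply: alg_base. Qed.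
Lemma smoothM_ (a b : E -> R) : smooth a -> smooth b -> smooth (a * b).
Proof. by move=> sa sb; apply/alg_smooth/alg_mul; apply: alg_base. Qed.

End Gen.

End P1.
Import P1.

Module P2.
Section Sch.
Variables (R : realType) (E : normedModType R).

Lemma derive_aff (E' F : normedModType R) (f : E' -> R) (g : F -> R) a b v w :
  (forall h : R, f (h *: v + a) = g (h *: w + b)) -> f a = g b ->
  'D_v f a = 'D_w g b.
Proof.
move=> H1 H2; rewrite /derive; set g1 := fun h => _; set g2 := fun h => _.
suff -> : g1 = g2 by [].
by apply/funext => h; rewrite /g1 /g2 /= addrC H1 H2 addrC.
Qed.

Lemma derivable_aff (E' F : normedModType R) (f : E' -> R) (g : F -> R) a b v w :
  (forall h : R, f (h *: v + a) = g (h *: w + b)) -> f a = g b ->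
  derivable f a v = derivable g b w.
Proof.
move=> H1 H2; rewrite /derivable; set g1 := fun h => _; set g2 := fun h => _.
suff -> : g1 = g2 by [].
by apply/funext => h; rewrite /g1 /g2 /= addrC H1 H2 addrC.
Qed.

Lemma mvt_dir (phi : E -> R) (y w : E) (T : R) : 0 < T ->
  (forall z, differentiable phi z) ->
  exists2 c, c \in `]0, T[ & phi (T *: w + y) - phi y = 'D_w phi (c *: w + y) * T.
Proof.
move=> T0 dphi.
set g := fun t : R => phi (t *: w + y).
have dg : forall t : R, is_derive t (1 : R) g ('D_w phi (t *: w + y)).
  move=> t; apply: DeriveDef.
    rewrite (derivable_aff (g := phi) (b := t *: w + y) (w := w)) //.
      exact: diff_derivable.
    by move=> h; rewrite /g scaler1 scalerDl addrA.
  apply: derive_aff => //.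
  by move=> h; rewrite /g scaler1 scalerDl addrA.
have cg : continuous g.
  move=> t; apply: differentiable_continuous.
  apply/derivable1_diffP; by have [] := dg t.
have [c cin Hc] := MVT (f := g) (df := fun t => 'D_w phi (t *: w + y)) T0
   (fun t _ => dg t) (continuous_subspaceT cg).
exists c => //; move: Hc; rewrite /g scale0r add0r subr0 => ->; done.
Qed.

Lemma delta_rep (h : E -> R) (u v x : E) (s t : R) : 0 < s -> 0 < t ->
  (forall z, differentiable h z) -> (forall z, differentiable ('D_v h) z) ->
  exists s1, exists t1, [/\ s1 \in `]0, s[, t1 \in `]0, t[ &
   h (t *: v + (s *: u + x)) - h (s *: u + x) - (h (t *: v + x) - h x) =
   'D_u ('D_v h) (s1 *: u + (t1 *: v + x)) * s * t].
Proof.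
move=> s0 t0 dh dDh.
set H := fun z => h (z + s *: u) - h z.
have dhs : forall z, differentiable (fun z => h (z + s *: u)) z.
  move=> z; apply: (@differentiable_comp _ _ _ _ (fun z => z + s *: u) h) => //.
have dH : forall z, differentiable H z.
  by move=> z; apply: differentiableB.
have DH : forall z, 'D_v H z = 'D_v h (z + s *: u) - 'D_v h z.
  move=> z; rewrite deriveB; try exact: diff_derivable.
  congr (_ - _); apply: derive_aff => // r; by rewrite addrA.
have [t1 t1in Ht1] := mvt_dir x v t0 dH.
have [s1 s1in Hs1] := mvt_dir (t1 *: v + x) u s0 dDh.
exists s1, t1; split => //.
have -> : h (t *: v + (s *: u + x)) - h (s *: u + x) - (h (t *: v + x) - h x)
   = H (t *: v + x) - H x.
  rewrite /H -(addrA (t *: v)) (addrC x (s *: u)); ring.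
rewrite Ht1 DH (addrC _ (s *: u)) Hs1; done.
Qed.

Lemma near_pt (x u v : E) (e s1 t1 : R) : s1 \in `]0, e[ -> t1 \in `]0, e[ ->
  `|x - (s1 *: u + (t1 *: v + x))| <= e * (`|u| + `|v|).
Proof.
rewrite !in_itv /= => /andP[s10 s1e] /andP[t10 t1e].
have -> : x - (s1 *: u + (t1 *: v + x)) = - (s1 *: u + t1 *: v).
  by rewrite addrA (addrC _ x) opprD addrA subrr add0r.
rewrite normrN (le_trans (ler_normD _ _)) // !normrZ !gtr0_norm //.
rewrite mulrDr lerD // ler_wpM2r // ltW //.
Qed.

Lemma cont_eq (a b : E -> R) x : {for x, continuous a} -> {for x, continuous b} ->
  (forall d, 0 < d -> exists p1, exists p2,
      [/\ `|x - p1| < d, `|x - p2| < d & a p1 = b p2]) -> a x = b x.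
Proof.
move=> ca cb H; case: (eqVneq (a x) (b x)) => // nz.
have d0 : 0 < `|a x - b x| / 2 by rewrite divr_gt0 // normr_gt0 subr_eq0.
have Ha := @cvgr_dist_lt _ _ _ _ _ a (a x) ca _ d0.
have [d1 d1p B1] := (nbhs_ballP _ _).1 (Ha _).
have Hb := @cvgr_dist_lt _ _ _ _ _ b (b x) cb _ d0.
have [d2 d2p B2] := (nbhs_ballP _ _).1 (Hb _).
have [p1 [p2 [H1 H2 E12]]] : exists p1 p2, [/\ `|x - p1| < Num.min d1 d2, `|x - p2| < Num.min d1 d2 & a p1 = b p2].
  by apply: H; rewrite lt_min d1p d2p.
move: H1 H2; rewrite !lt_min => /andP[H1 _] /andP[_ H2].
have K1 : `|a x - a p1| < `|a x - b x| / 2.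
  by apply: B1; rewrite -ball_normE.
have K2 : `|b x - b p2| < `|a x - b x| / 2.
  by apply: B2; rewrite -ball_normE.
have : `|a x - b x| < `|a x - b x|.
  have E3 : a x - b x = (a x - a p1) - (b x - b p2) by rewrite E12; ring.
  rewrite {1}E3 (le_lt_trans (ler_normB _ _)) //.
  by rewrite [X in _ < X](splitr `|a x - b x|) ltrD.
by rewrite ltxx.
Qed.

Lemma schwarz (h : E -> R) u v x : smooth h ->
  'D_u ('D_v h) x = 'D_v ('D_u h) x.
Proof.
move=> sh.
have dh z : differentiable h z := sh [::] z.
have dDv z : differentiable ('D_v h) z := sh [:: v] z.
have dDu z : differentiable ('D_u h) z := sh [:: u] z.
apply: (@cont_eq ('D_u ('D_v h)) ('D_v ('D_u h)) x).
- exact: differentiable_continuous (sh [:: u; v] x).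
- exact: differentiable_continuous (sh [:: v; u] x).
move=> d d0.
have N0 : 0 < `|u| + `|v| + 1 by rewrite ltr_wpDl // addr_ge0.
set e := d / (`|u| + `|v| + 1).
have e0 : 0 < e by rewrite divr_gt0.
have ed : e * (`|u| + `|v|) < d.
  rewrite /e mulrAC ltr_pdivrMr // ltr_pM2l // ltrDl //.
have [s1 [t1 [s1in t1in H1]]] := delta_rep u x e0 e0 dh dDv.
have [s2 [t2 [s2in t2in H2]]] := delta_rep v x e0 e0 dh dDu.
exists (s1 *: u + (t1 *: v + x)), (s2 *: v + (t2 *: u + x)); split.
- exact: le_lt_trans (near_pt x u v s1in t1in) ed.
- by apply: le_lt_trans (near_pt x v u s2in t2in) _; rewrite addrC.
apply: (@mulIf _ (e * e)); first by rewrite mulf_neq0 // gt_eqF.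
have mA c : c * (e * e) = c * e * e by rewrite mulrA.
rewrite !mA -H1 -H2 addrCA; ring.
Qed.

End Sch.

End P2.
Import P2.

Module P3.

Section Main.
Variables (R : realType) (k : nat).
Local Notation vec := 'rV[R]_k.
Local Notation pvec := (vec * vec)%type.

Definition eP (l : 'I_k) : pvec := (delta_mx 0 l, 0).
Definition eX (l : 'I_k) : pvec := (0, delta_mx 0 l).
End Main.
Arguments eP {R k}.
Arguments eX {R k}.
Section Main.
Variables (R : realType) (k : nat).
Local Notation vec := 'rV[R]_k.
Local Notation pvec := (vec * vec)%type.

Lemma fst_diff (w : pvec) : differentiable (@fst vec vec) w.
Proof. apply: (@linear_differentiable _ _ _ (@fst vec vec)) => x; exact: cvg_fst. Qed.

Lemma smooth_cst0 (E : normedModType R) : smooth (fun _ : E => (0 : R)).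
Proof.
suff H : forall vs : seq E, Defs.iterD vs (fun _ => 0) = (fun _ => 0).
  by move=> vs x; rewrite H; exact: differentiable_cst.
elim=> //= v vs ->; apply/funext => x; exact: derive_cst.
Qed.

Lemma smooth_sum (E : normedModType R) n (F : 'I_n -> E -> R) :
  (forall i, smooth (F i)) -> smooth (fun w => \sum_(i < n) F i w).
Proof.
move=> sF; rewrite -fct_sumE; apply: alg_smooth.
apply: (big_ind (@alg R E)); first exact/alg_base/smooth_cst0.
- by move=> p q; apply: alg_add.
- by move=> i _; apply: alg_base.
Qed.

Lemma smooth_fst (c : vec -> R) : smooth c -> smooth (fun w : pvec => c w.1).
Proof.
move=> sc.
suff H : forall vs : seq pvec, Defs.iterD vs (fun w : pvec => c w.1) =
   (fun w => Defs.iterD (map fst vs) c w.1).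
  move=> vs x; rewrite H.
  apply: (@differentiable_comp _ _ _ _ fst (Defs.iterD (map fst vs) c)).
    exact: fst_diff.
  exact: sc.
elim=> //= v vs ->; apply/funext => x; apply: derive_aff => //.
Qed.

Lemma pairD (a b c d : vec) : ((a, b) : pvec) + (c, d) = (a + c, b + d).
Proof. by rewrite [LHS]/GRing.add /= /add_pair. Qed.

Lemma pairZ (c : R) (a b : vec) : c *: ((a, b) : pvec) = (c *: a, c *: b).
Proof. by []. Qed.

Lemma pair_decomp (a b : vec) :
  (a, b) = \sum_(l < k) a 0 l *: eP l + \sum_(l < k) b 0 l *: eX l.
Proof.
have -> : (a, b) = ((a, 0) : pvec) + (0, b) by rewrite pairD addr0 add0r.
congr (_ + _).
  transitivity ((\sum_(l < k) a 0 l *: (delta_mx 0 l : vec), 0) : pvec).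
    by rewrite -row_sum_delta.
  apply: (big_rec2 (fun (x : vec) (y : pvec) => (x, 0) = y)) => // i x y _ <-.
  by rewrite /eP pairZ pairD scaler0 addr0.
transitivity ((0, \sum_(l < k) b 0 l *: (delta_mx 0 l : vec)) : pvec).
  by rewrite -row_sum_delta.
apply: (big_rec2 (fun (x : vec) (y : pvec) => (0, x) = y)) => // i x y _ <-.
by rewrite /eX pairZ pairD scaler0 addr0.
Qed.

Lemma D_decomp (h : pvec -> R) (w : pvec) (a b : vec) : differentiable h w ->
  'D_((a, b) : pvec) h w =
  \sum_(l < k) a 0 l * 'D_(eP l) h w + \sum_(l < k) b 0 l * 'D_(eX l) h w.
Proof.
move=> dh; rewrite deriveE // pair_decomp linearD !linear_sum.
congr (_ + _); apply: eq_bigr => l _; by rewrite linearZ deriveE.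
Qed.

End Main.

End P3.
Import P3.

Module P4.

Section Ops.
Variables (R : realType) (k : nat).
Local Notation vec := 'rV[R]_k.
Local Notation pvec := (vec * vec)%type.

Lemma Dmul (E : normedModType R) (a b : E -> R) w v :
  differentiable a w -> differentiable b w ->
  'D_v (fun z => a z * b z) w = a w * 'D_v b w + b w * 'D_v a w.
Proof.
move=> da db; have dav : derivable a w v := diff_derivable da.
have dbv : derivable b w v := diff_derivable db.
have := deriveM dav dbv.
by [].
Qed.

Lemma Dadd (E : normedModType R) (a b : E -> R) w v :
  differentiable a w -> differentiable b w ->
  'D_v (fun z => a z + b z) w = 'D_v a w + 'D_v b w.
Proof.
move=> da db; have dav : derivable a w v := diff_derivable da.
have dbv : derivable b w v := diff_derivable db.
have := deriveD dav dbv.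
by [].
Qed.

Lemma Dscal (E : normedModType R) (a : E -> R) (c : R) w v :
  differentiable a w -> 'D_v (fun z => c * a z) w = c * 'D_v a w.
Proof.
move=> da; have dav : derivable a w v := diff_derivable da.
have := deriveZ c dav.
by [].
Qed.

Lemma Dsum (E : normedModType R) n (F : 'I_n -> E -> R) w v :
  (forall i, differentiable (F i) w) ->
  'D_v (fun z => \sum_(i < n) F i z) w = \sum_(i < n) 'D_v (F i) w.
Proof.
move=> dF; rewrite -fct_sumE derive_sum // => i; exact: diff_derivable.
Qed.

Lemma diff_sum (E : normedModType R) n (F : 'I_n -> E -> R) w :
  (forall i, differentiable (F i) w) ->
  differentiable (fun z => \sum_(i < n) F i z) w.
Proof. by move=> dF; rewrite -fct_sumE; apply: differentiable_sum. Qed.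

Lemma act_tr (X : vec -> vec) (h : pvec -> R) (xi : vec) :
  vf_act X (fun q => h (q, xi)) = fun q => pact X h (q, xi).
Proof.
apply/funext => q; rewrite /vf_act /pact /=; apply: derive_aff => // r.
by rewrite pairZ pairD scaler0 add0r.
Qed.

Lemma smooth_tr (h : pvec -> R) (xi : vec) : smooth h -> smooth (fun q => h (q, xi)).
Proof.
move=> sh.
suff H : forall vs : seq vec, Defs.iterD vs (fun q => h (q, xi)) =
   (fun q => Defs.iterD (map (fun v => ((v, 0) : pvec)) vs) h (q, xi)).
  move=> vs x; rewrite H.
  apply: (@differentiable_comp _ _ _ _ (fun q : vec => ((q, xi) : pvec))).
    apply: differentiable_pair => //; exact: differentiable_cst.
  exact: sh.
elim=> //= v vs ->; apply/funext => x; apply: derive_aff => // r.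
by rewrite pairZ pairD scaler0 add0r.
Qed.

End Ops.

End P4.
Import P4.

Module P5.

Section Main.
Variables (R : realType) (k : nat).
Local Notation vec := 'rV[R]_k.
Local Notation pvec := (vec * vec)%type.
Variables (V0 : vec -> vec) (V : 'I_k -> vec -> vec) (sigma : vec -> vec).
Hypotheses (hV0 : smooth_vf V0) (hV : forall i, smooth_vf (V i)) (hs : C1_map sigma).

Lemma pact_exp (X : vec -> vec) (h : pvec -> R) : (forall w, differentiable h w) ->
  pact X h = fun w => \sum_(l < k) Defs.comp X l w.1 * 'D_(eP l) h w.
Proof.
move=> dh; apply/funext => w; rewrite /pact D_decomp //.
by rewrite [X in _ + X]big1 ?addr0 // => l _; rewrite mxE mul0r.
Qed.

Lemma Zsig_exp (h : pvec -> R) : (forall w, differentiable h w) ->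
  Zsig sigma h = fun w => \sum_(l < k) Defs.comp sigma l w.1 * dxi l h w.
Proof.
move=> dh; apply/funext => w; rewrite /Zsig D_decomp //.
by rewrite [X in X + _]big1 ?add0r // => l _; rewrite mxE mul0r.
Qed.

Lemma smooth_pact (X : vec -> vec) (h : pvec -> R) : smooth_vf X -> smooth h ->
  smooth (pact X h).
Proof.
move=> sX sh; rewrite pact_exp; last by move=> w; exact: smooth_diff.
apply: smooth_sum => l.
apply: (@smoothM_ R _ (fun w : pvec => Defs.comp X l w.1) ('D_(eP l) h)).
  exact: smooth_fst.
exact: smoothD1.
Qed.

Lemma diff_Zsig (h : pvec -> R) : smooth h -> forall w, differentiable (Zsig sigma h) w.
Proof.
move=> sh w; rewrite Zsig_exp; last by move=> z; exact: smooth_diff.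
apply: diff_sum => l.
apply: (@differentiableM _ _ (fun w : pvec => Defs.comp sigma l w.1) (dxi l h)).
  apply: (@differentiable_comp _ _ _ _ fst (Defs.comp sigma l)); first exact: fst_diff.
  exact: (hs l).1.
exact: (sh [:: eX l]).
Qed.

Definition LP (h : pvec -> R) : pvec -> R :=
  fun w => \sum_(i < k) pact (V i) (pact (V i) h) w + pact V0 h w.

Lemma smooth_LP h : smooth h -> smooth (LP h).
Proof.
move=> sh; apply: (@smoothD_ R _ (fun w => \sum_(i < k) pact (V i) (pact (V i) h) w) (pact V0 h)).
  apply: smooth_sum => i; apply: smooth_pact => //; exact: smooth_pact.
exact: smooth_pact.
Qed.

Lemma calLE h : calL V0 V sigma h = fun w => LP h w + Zsig sigma h w.
Proof. by []. Qed.

End Main.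

End P5.
Import P5.

Module P6.

Section Alg.
Variables (R : realType) (k : nat).
Local Notation vec := 'rV[R]_k.
Local Notation pvec := (vec * vec)%type.
Variables (V0 : vec -> vec) (V : 'I_k -> vec -> vec) (sigma : vec -> vec).
Hypotheses (hV0 : smooth_vf V0) (hV : forall i, smooth_vf (V i)) (hs : C1_map sigma).

Local Notation LP := (LP V0 V).

Lemma sdiff (h : pvec -> R) w : smooth h -> differentiable h w.
Proof. by move=> sh; exact: smooth_diff. Qed.

Lemma pact_sq (X : vec -> vec) (h : pvec -> R) : smooth h ->
  pact X (fun z => h z * h z) = fun z => 2 * h z * pact X h z.
Proof.
move=> sh; apply/funext => z; rewrite /pact Dmul; try exact: sdiff.
ring.
Qed.

Lemma LP_sq (h : pvec -> R) w : smooth h ->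
  LP (fun z => h z * h z) w = 2 * h w * LP h w + 2 * GammaB V h h w.
Proof.
move=> sh.
have E1 i : pact (V i) (pact (V i) (fun z => h z * h z)) w =
    2 * h w * pact (V i) (pact (V i) h) w + 2 * (pact (V i) h w * pact (V i) h w).
  rewrite pact_sq // {1}/pact.
  rewrite (@Dmul R _ (fun z => 2 * h z) (pact (V i) h)).
  - rewrite Dscal; last exact: sdiff.
    rewrite -/(pact (V i) _ w) -/(pact (V i) h w); ring.
  - apply: (@differentiableM _ _ (fun _ => 2) h); first exact: differentiable_cst.
    exact: sdiff.
  - by apply: sdiff; apply: smooth_pact.
rewrite /P5.LP (eq_bigr _ (fun i _ => E1 i)) big_split /= -!mulr_sumr pact_sq //.
rewrite /GammaB; ring.
Qed.

Lemma Zsig_sq (h : pvec -> R) w : smooth h ->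
  Zsig sigma (fun z => h z * h z) w = 2 * h w * Zsig sigma h w.
Proof.
move=> sh; rewrite /Zsig Dmul; try exact: sdiff.
ring.
Qed.

Lemma calLE' g z : calL V0 V sigma g z = LP g z + Zsig sigma g z.
Proof. by []. Qed.

Lemma Gamma_eq (f : pvec -> R) : smooth f -> Gamma V0 V sigma f = GammaB V f f.
Proof.
move=> sf; apply/funext => z; rewrite /Gamma !calLE' LP_sq // Zsig_sq //.
by field.
Qed.

End Alg.

End P6.
Import P6.

Module P7.

Section Tr.
Variables (R : realType) (k : nat).
Local Notation vec := 'rV[R]_k.
Local Notation pvec := (vec * vec)%type.
Variables (V0 : vec -> vec) (V : 'I_k -> vec -> vec) (sigma : vec -> vec).
Hypotheses (hV0 : smooth_vf V0) (hV : forall i, smooth_vf (V i)) (hs : C1_map sigma).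

Local Notation LP := (LP V0 V).

Definition GLp (h : pvec -> R) w := 2^-1 * (LP (fun q => h q * h q) w - 2 * h w * LP h w).
Definition GLBp (a b : pvec -> R) w :=
  4^-1 * (GLp (fun q => a q + b q) w - GLp (fun q => a q - b q) w).
Definition G2Lp (h : pvec -> R) w := 2^-1 * (LP (GLp h) w - 2 * GLBp h (LP h) w).

Lemma Lop_tr (h : pvec -> R) xi :
  Lop V0 V (fun q => h (q, xi)) = fun q => LP h (q, xi).
Proof.
apply/funext => q; rewrite /Lop /P5.LP.
have E i : vf_act (V i) (vf_act (V i) (fun q0 => h (q0, xi))) q =
    pact (V i) (pact (V i) h) (q, xi).
  rewrite (f_equal (fun g => vf_act (V i) g q) (act_tr (V i) h xi)).
  rewrite (act_tr (V i) (pact (V i) h) xi).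
  done.
rewrite [X in X + _ = _](eq_bigr _ (fun i _ => E i)).
rewrite (f_equal (fun g => g q) (act_tr V0 h xi)).
done.
Qed.
Lemma GammaL_tr (h : pvec -> R) xi :
  GammaL V0 V (fun q => h (q, xi)) = fun q => GLp h (q, xi).
Proof.
apply/funext => q; rewrite /GammaL.
rewrite (f_equal (fun g => g q) (Lop_tr (fun w => h w * h w) xi)).
by rewrite (f_equal (fun g => g q) (Lop_tr h xi)).
Qed.

Lemma GammaLB_tr (a b : pvec -> R) xi :
  GammaLB V0 V (fun q => a (q, xi)) (fun q => b (q, xi)) = fun q => GLBp a b (q, xi).
Proof.
apply/funext => q; rewrite /GammaLB.
rewrite (f_equal (fun g => g q) (GammaL_tr (fun w => a w + b w) xi)).
by rewrite (f_equal (fun g => g q) (GammaL_tr (fun w => a w - b w) xi)).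
Qed.

Lemma Gamma2L_tr (h : pvec -> R) xi p :
  Gamma2L V0 V (fun q => h (q, xi)) p = G2Lp h (p, xi).
Proof.
rewrite /Gamma2L (GammaL_tr h xi) (Lop_tr h xi).
rewrite (f_equal (fun g => g p) (Lop_tr (GLp h) xi)).
by rewrite (f_equal (fun g => g p) (GammaLB_tr h (LP h) xi)).
Qed.

End Tr.

End P7.
Import P7.

Module P8.

Lemma smooth_cst (R : realType) (E : normedModType R) (c : R) : smooth (fun _ : E => c).
Proof.
suff H : forall vs : seq E, exists c', Defs.iterD vs (fun _ => c) = (fun _ => c').
  by move=> vs x; have [c' ->] := H vs; exact: differentiable_cst.
elim=> [|v vs [c' IH]] /=; first by exists c.
exists 0; rewrite IH; apply/funext => x; exact: derive_cst.
Qed.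

Lemma smoothD (R : realType) (E : normedModType R) (a b : E -> R) :
  smooth a -> smooth b -> smooth (fun q => a q + b q).
Proof. exact: smoothD_. Qed.

Lemma smoothB (R : realType) (E : normedModType R) (a b : E -> R) :
  smooth a -> smooth b -> smooth (fun q => a q - b q).
Proof.
move=> sa sb.
have -> : (fun q => a q - b q) = a + (fun _ => -1) * b.
  by apply/funext => q /=; rewrite mulN1r.
apply: smoothD_ => //; apply: smoothM_ => //; exact: smooth_cst.
Qed.

Lemma Dsub (R : realType) (E : normedModType R) (a b : E -> R) w v :
  differentiable a w -> differentiable b w ->
  'D_v (fun z => a z - b z) w = 'D_v a w - 'D_v b w.
Proof.
move=> da db.
have dav : derivable a w v := diff_derivable da.
have dbv : derivable b w v := diff_derivable db.
by have := deriveB dav dbv.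
Qed.

Section Id.
Variables (R : realType) (k : nat).
Local Notation vec := 'rV[R]_k.
Local Notation pvec := (vec * vec)%type.
Variables (V0 : vec -> vec) (V : 'I_k -> vec -> vec) (sigma : vec -> vec).
Hypotheses (hV0 : smooth_vf V0) (hV : forall i, smooth_vf (V i)) (hs : C1_map sigma).

Local Notation LP := (LP V0 V).
Local Notation GLp := (GLp V0 V).
Local Notation GLBp := (GLBp V0 V).
Local Notation G2Lp := (G2Lp V0 V).

Lemma GLp_eq (h : pvec -> R) : smooth h -> GLp h = GammaB V h h.
Proof.
move=> sh; apply/funext => w; rewrite /P7.GLp LP_sq //.
by field.
Qed.

Lemma pact_add (X : vec -> vec) (a b : pvec -> R) : smooth a -> smooth b ->
  pact X (fun z => a z + b z) = fun z => pact X a z + pact X b z.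
Proof.
by move=> sa sb; apply/funext => z; rewrite /pact Dadd //; apply: sdiff.
Qed.

Lemma pact_sub (X : vec -> vec) (a b : pvec -> R) : smooth a -> smooth b ->
  pact X (fun z => a z - b z) = fun z => pact X a z - pact X b z.
Proof.
by move=> sa sb; apply/funext => z; rewrite /pact Dsub //; apply: sdiff.
Qed.

Lemma GLBp_eq (a b : pvec -> R) w : smooth a -> smooth b ->
  GLBp a b w = GammaB V a b w.
Proof.
move=> sa sb; rewrite /P7.GLBp (GLp_eq (smoothD sa sb)) (GLp_eq (smoothB sa sb)).
rewrite /GammaB -sumrB mulr_sumr; apply: eq_bigr => i _.
rewrite (pact_add (V i) sa sb) (pact_sub (V i) sa sb).
by field.
Qed.

End Id.

End P8.
Import P8.

Module P9.

Lemma alg1 (R : realType) (A S1 S2 S3 : R) :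
  2^-1 * (A + 2 * S3 - 2 * (S1 + S2)) = 2^-1 * (A - 2 * S1) + (S3 - S2).
Proof. by field. Qed.

Section Dec.
Variables (R : realType) (k : nat).
Local Notation vec := 'rV[R]_k.
Local Notation pvec := (vec * vec)%type.
Variables (V0 : vec -> vec) (V : 'I_k -> vec -> vec) (sigma : vec -> vec).
Hypotheses (hV0 : smooth_vf V0) (hV : forall i, smooth_vf (V i)) (hs : C1_map sigma).

Local Notation LP := (LP V0 V).
Local Notation GLp := (GLp V0 V).
Local Notation GLBp := (GLBp V0 V).
Local Notation G2Lp := (G2Lp V0 V).

Lemma Gamma2_dec (f : pvec -> R) z : smooth f ->
  Gamma2 V0 V sigma f z = G2Lp f z + \sum_(i < k) pact (V i) f z *
     (Zsig sigma (pact (V i) f) z - pact (V i) (Zsig sigma f) z).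
Proof.
move=> sf.
have sP i : smooth (pact (V i) f) by apply: smooth_pact.
rewrite /Gamma2 (Gamma_eq V0 sigma hV sf) calLE'.
rewrite /P7.G2Lp (GLp_eq V0 hV sf) (GLBp_eq V0 hV z sf (smooth_LP hV0 hV sf)).
have Z1 : Zsig sigma (GammaB V f f) z =
    \sum_(i < k) 2 * (pact (V i) f z * Zsig sigma (pact (V i) f) z).
  rewrite /Zsig /GammaB Dsum; last first.
    move=> i; apply: (@differentiableM _ _ (pact (V i) f) (pact (V i) f)); exact: sdiff.
  apply: eq_bigr => i _; rewrite Dmul; try exact: sdiff.
  ring.
have Z2 : GammaB V f (calL V0 V sigma f) z =
    \sum_(i < k) pact (V i) f z * pact (V i) (LP f) z +
    \sum_(i < k) pact (V i) f z * pact (V i) (Zsig sigma f) z.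
  rewrite /GammaB -big_split; apply: eq_bigr => i _.
  rewrite calLE /pact Dadd; first by rewrite mulrDr.
    exact: sdiff (smooth_LP hV0 hV sf).
  exact: (diff_Zsig hs sf).
rewrite Z1 Z2 {2}/GammaB -mulr_sumr.
have -> : \sum_(i < k) pact (V i) f z *
     (Zsig sigma (pact (V i) f) z - pact (V i) (Zsig sigma f) z) =
   \sum_(i < k) pact (V i) f z * Zsig sigma (pact (V i) f) z -
   \sum_(i < k) pact (V i) f z * pact (V i) (Zsig sigma f) z.
  by rewrite -sumrB; apply: eq_bigr => i _; rewrite mulrBr.
exact: alg1.
Qed.

End Dec.

End P9.
Import P9.

Module P10.

Section Comm.
Variables (R : realType) (k : nat).
Local Notation vec := 'rV[R]_k.
Local Notation pvec := (vec * vec)%type.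
Variables (V0 : vec -> vec) (V : 'I_k -> vec -> vec) (sigma : vec -> vec).
Hypotheses (hV0 : smooth_vf V0) (hV : forall i, smooth_vf (V i)) (hs : C1_map sigma).

Local Notation LP := (LP V0 V).

Lemma freeze (F : vec -> pvec -> R) j z :
  'D_(eX j) (fun w => F w.1 w) z = 'D_(eX j) (F z.1) z.
Proof.
apply: derive_aff => // r; case: z => p xi.
by rewrite /eX pairZ pairD scaler0 add0r.
Qed.

Lemma smooth_dxi (h : pvec -> R) j : smooth h -> smooth (dxi j h).
Proof. by move=> sh; exact: (@smoothD1 R _ h (eX j)). Qed.

Lemma dxi_pact (X : vec -> vec) (h : pvec -> R) j : smooth h ->
  dxi j (pact X h) = pact X (dxi j h).
Proof.
move=> sh; apply/funext => z.
have E := freeze (fun p w => 'D_((X p, 0) : pvec) h w) j z.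
exact: (etrans E (schwarz (eX j) ((X z.1, 0) : pvec) z sh)).
Qed.

Lemma dxi_Zsig (h : pvec -> R) j : smooth h ->
  dxi j (Zsig sigma h) = Zsig sigma (dxi j h).
Proof.
move=> sh; apply/funext => z.
have E := freeze (fun p w => 'D_(((0 : vec), sigma p) : pvec) h w) j z.
exact: (etrans E (schwarz (eX j) (((0 : vec), sigma z.1) : pvec) z sh)).
Qed.

End Comm.

End P10.
Import P10.

Module P11.

Section Comm2.
Variables (R : realType) (k : nat).
Local Notation vec := 'rV[R]_k.
Local Notation pvec := (vec * vec)%type.
Variables (V0 : vec -> vec) (V : 'I_k -> vec -> vec) (sigma : vec -> vec).
Hypotheses (hV0 : smooth_vf V0) (hV : forall i, smooth_vf (V i)) (hs : C1_map sigma).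

Local Notation LP := (LP V0 V).

Lemma pact_sum (X : vec -> vec) n (F : 'I_n -> pvec -> R) z :
  (forall j, smooth (F j)) ->
  pact X (fun w => \sum_(j < n) F j w) z = \sum_(j < n) pact X (F j) z.
Proof. by move=> sF; rewrite /pact Dsum // => j; apply: sdiff. Qed.

Lemma diff_sfst j (w : pvec) : differentiable (fun w : pvec => Defs.comp sigma j w.1) w.
Proof.
apply: (@differentiable_comp _ _ _ _ fst (Defs.comp sigma j)); first exact: fst_diff.
exact: (hs j).1.
Qed.

Lemma comm (X : vec -> vec) (f : pvec -> R) z : smooth_vf X -> smooth f ->
  Zsig sigma (pact X f) z - pact X (Zsig sigma f) z =
  - \sum_(j < k) vf_act X (Defs.comp sigma j) z.1 * dxi j f z.
Proof.
move=> sX sf.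
have sPf : smooth (pact X f) by apply: smooth_pact.
rewrite (Zsig_exp sigma (fun w => sdiff w sPf)) (Zsig_exp sigma (fun w => sdiff w sf)).
rewrite /pact Dsum; last first.
  move=> j; apply: (@differentiableM _ _ (fun w : pvec => Defs.comp sigma j w.1) (dxi j f)).
    exact: diff_sfst.
  exact: sdiff (smooth_dxi j sf).
rewrite -sumrB -sumrN; apply: eq_bigr => j _.
rewrite -/(pact X f) (dxi_pact X j sf).
rewrite (@Dmul R _ (fun w : pvec => Defs.comp sigma j w.1) (dxi j f)); last first.
- exact: sdiff (smooth_dxi j sf).
- exact: diff_sfst.
have -> : 'D_((X z.1, 0) : pvec) (fun w : pvec => Defs.comp sigma j w.1) z =
          vf_act X (Defs.comp sigma j) z.1.
  rewrite /vf_act; apply: derive_aff => // r.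
rewrite /pact; ring.
Qed.

End Comm2.

End P11.
Import P11.

Module P12.

Section Z.
Variables (R : realType) (k : nat).
Local Notation vec := 'rV[R]_k.
Local Notation pvec := (vec * vec)%type.
Variables (V0 : vec -> vec) (V : 'I_k -> vec -> vec) (sigma : vec -> vec).
Hypotheses (hV0 : smooth_vf V0) (hV : forall i, smooth_vf (V i)) (hs : C1_map sigma).

Local Notation LP := (LP V0 V).

Lemma calL_sum n (F : 'I_n -> pvec -> R) z : (forall j, smooth (F j)) ->
  calL V0 V sigma (fun w => \sum_(j < n) F j w) z = \sum_(j < n) calL V0 V sigma (F j) z.
Proof.
move=> sF; rewrite calLE'.
have E1 i : pact (V i) (fun w => \sum_(j < n) F j w) =
    (fun w => \sum_(j < n) pact (V i) (F j) w).
  by apply/funext => w; rewrite pact_sum.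
have E2 i : pact (V i) (pact (V i) (fun w => \sum_(j < n) F j w)) z =
    \sum_(j < n) pact (V i) (pact (V i) (F j)) z.
  by rewrite E1 pact_sum // => j; apply: smooth_pact.
rewrite /P5.LP (eq_bigr _ (fun i _ => E2 i)) exchange_big /= pact_sum //.
rewrite /Zsig Dsum; last by move=> j; apply: sdiff.
rewrite -!big_split /=; apply: eq_bigr => j _.
by rewrite calLE'.
Qed.

Lemma dxi_calL (f : pvec -> R) j z : smooth f ->
  dxi j (calL V0 V sigma f) z = calL V0 V sigma (dxi j f) z.
Proof.
move=> sf.
have sLf := smooth_LP hV0 hV sf.
rewrite calLE /dxi Dadd; [| exact: sdiff | exact: diff_Zsig].
rewrite -/(dxi j (Zsig sigma f) z) (dxi_Zsig sigma j sf) calLE'.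
congr (_ + _).
rewrite /P5.LP Dadd; last first.
- by apply: sdiff; apply: smooth_pact.
- by apply: sdiff; apply: smooth_sum => i; apply: smooth_pact => //; apply: smooth_pact.
rewrite Dsum; last by move=> i; apply: sdiff; apply: smooth_pact => //; apply: smooth_pact.
rewrite -/(dxi j (pact V0 f) z) (dxi_pact V0 j sf).
have E i : dxi j (pact (V i) (pact (V i) f)) z = pact (V i) (pact (V i) (dxi j f)) z.
  rewrite (dxi_pact (V i) j (smooth_pact (hV i) sf)).
  by rewrite (dxi_pact (V i) j sf).
by rewrite [X in X + _ = _](eq_bigr _ (fun i _ => E i)).
Qed.

End Z.

End P12.
Import P12.

Module P13.

Lemma alg2 (R : realType) (a b c g : R) :
  2^-1 * (2 * a * b + 2 * g + 2 * a * c) - a * (b + c) = g.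
Proof. by field. Qed.

Section Z2.
Variables (R : realType) (k : nat).
Local Notation vec := 'rV[R]_k.
Local Notation pvec := (vec * vec)%type.
Variables (V0 : vec -> vec) (V : 'I_k -> vec -> vec) (sigma : vec -> vec).
Hypotheses (hV0 : smooth_vf V0) (hV : forall i, smooth_vf (V i)) (hs : C1_map sigma).

Lemma GB_ge0 (h : pvec -> R) z : 0 <= GammaB V h h z.
Proof. by apply: sumr_ge0 => i _; rewrite -expr2 sqr_ge0. Qed.

Lemma Gamma2Z_ge0 (f : pvec -> R) z : smooth f -> 0 <= Gamma2Z V0 V sigma f z.
Proof.
move=> sf.
have sd j : smooth (dxi j f) by apply: smooth_dxi.
rewrite /Gamma2Z /GammaZ /GammaZB.
rewrite (@calL_sum R k V0 V sigma hV k (fun j w => dxi j f w * dxi j f w) z); last first.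
  by move=> j; apply: (@smoothM_ R _ (dxi j f) (dxi j f)).
rewrite mulrBr mulrA mulVf ?pnatr_eq0 // mul1r mulr_sumr -sumrB.
apply: sumr_ge0 => j _.
rewrite calLE' (LP_sq V0 hV z (sd j)) (Zsig_sq sigma z (sd j)).
rewrite (dxi_calL hV0 hV hs j z sf) calLE'.
rewrite alg2; exact: GB_ge0.
Qed.

End Z2.

End P13.
Import P13.

Module P14.

Lemma CS (R : realType) (I : finType) (x y : I -> R) :
  (\sum_i x i * y i) ^+ 2 <= (\sum_i x i ^+ 2) * (\sum_i y i ^+ 2).
Proof.
set A := \sum_i x i ^+ 2; set B := \sum_i x i * y i; set C := \sum_i y i ^+ 2.
have A0 : 0 <= A by apply: sumr_ge0 => i _; rewrite sqr_ge0.
have C0 : 0 <= C by apply: sumr_ge0 => i _; rewrite sqr_ge0.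
have E : \sum_i (A * y i - B * x i) ^+ 2 = A * (A * C - B ^+ 2).
  transitivity (\sum_i (A ^+ 2 * y i ^+ 2 - (2 * A * B) * (x i * y i) + B ^+ 2 * x i ^+ 2)).
    by apply: eq_bigr => i _; ring.
  rewrite big_split sumrB /= -!mulr_sumr -/A -/B -/C; ring.
have F : 0 <= A * (A * C - B ^+ 2).
  by rewrite -E; apply: sumr_ge0 => i _; rewrite sqr_ge0.
case: (eqVneq A 0) => [A00|An0].
  have x0 : forall i, x i = 0.
    move=> i; apply/eqP; rewrite -sqrf_eq0; apply/eqP.
    by move/eqP: A00; rewrite psumr_eq0 => [/allP /(_ i) H|j _]; [apply/eqP; apply: H; rewrite mem_index_enum | rewrite sqr_ge0].
  have -> : B = 0 by rewrite /B big1 // => i _; rewrite x0 mul0r.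
  by rewrite expr0n /= mulr_ge0.
have Ap : 0 < A by rewrite lt_neqAle eq_sym An0 A0.
by rewrite -subr_ge0; move: F; rewrite pmulr_rge0.
Qed.

Lemma key_ineq (R : realType) n (P d : 'I_n -> R) (a : 'I_n -> 'I_n -> R) (C : R) :
  Num.sqrt (\sum_(i < n) \sum_(j < n) a i j ^+ 2) <= C ->
  \sum_(i < n) P i * (\sum_(j < n) a i j * d j) <=
    C / 2 * (\sum_(i < n) P i * P i + \sum_(j < n) d j * d j).
Proof.
set A := \sum_(i < n) \sum_(j < n) a i j ^+ 2.
set N := \sum_(i < n) P i * P i; set M := \sum_(j < n) d j * d j.
set T := \sum_(i < n) P i * (\sum_(j < n) a i j * d j).
move=> sAC.
have A0 : 0 <= A by apply: sumr_ge0 => i _; apply: sumr_ge0 => j _; rewrite sqr_ge0.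
have N0 : 0 <= N by apply: sumr_ge0 => i _; rewrite -expr2 sqr_ge0.
have M0 : 0 <= M by apply: sumr_ge0 => i _; rewrite -expr2 sqr_ge0.
have C0 : 0 <= C by apply: le_trans sAC; apply: sqrtr_ge0.
have AC : A <= C ^+ 2.
  rewrite -(sqr_sqrtr A0); have s0 := sqrtr_ge0 A; nra.
have CSi : T ^+ 2 <= A * (N * M).
  have ET : T = \sum_(p : 'I_n * 'I_n) a p.1 p.2 * (P p.1 * d p.2).
    rewrite /T -(pair_bigA _ (fun i j => a i j * (P i * d j))) /=; apply: eq_bigr => i _; rewrite mulr_sumr.
    by apply: eq_bigr => j _; ring.
  have EA : A = \sum_(p : 'I_n * 'I_n) a p.1 p.2 ^+ 2.
    by rewrite /A -(pair_bigA _ (fun i j => a i j ^+ 2)).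
  have ENM : N * M = \sum_(p : 'I_n * 'I_n) (P p.1 * d p.2) ^+ 2.
    rewrite -(pair_bigA _ (fun i j => (P i * d j) ^+ 2)) /= /N /M mulr_suml; apply: eq_bigr => i _.
    rewrite mulr_sumr; apply: eq_bigr => j _; ring.
  rewrite ET EA ENM; exact: CS.
have NM : A * (N * M) <= C ^+ 2 * (N * M) by rewrite ler_wpM2r // mulr_ge0.
have Y0 : 0 <= C / 2 * (N + M) by rewrite mulr_ge0 ?divr_ge0 ?addr_ge0.
have NM2 : C ^+ 2 * (N * M) <= (C / 2 * (N + M)) ^+ 2.
  have : 0 <= C ^+ 2 * (N - M) ^+ 2 by rewrite mulr_ge0 ?sqr_ge0.
  move=> H; apply: (le_trans (y := C ^+ 2 * (N * M) + C ^+ 2 * (N - M) ^+ 2 / 4)).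
    by rewrite lerDl divr_ge0.
  rewrite le_eqVlt; apply/orP; left; apply/eqP; by field.
have : T ^+ 2 <= (C / 2 * (N + M)) ^+ 2 by apply: le_trans CSi (le_trans NM NM2).
move: Y0; set Y := C / 2 * (N + M); move=> Y0 HT.
nra.
Qed.

End P14.
Import P14.


Lemma final_alg (R : realType) (rho C GB G2 GZ T : R) :
  rho * GB <= G2 -> T <= C / 2 * (GB + GZ) ->
  (rho - C / 2) * GB - C / 2 * GZ <= G2 + - T.
Proof. move=> H1 H2; nra. Qed.


Unset Implicit Arguments. Set Strict Implicit. Set Printing Implicit Defensive.


Theorem theorem4p1 (R : realType) (k : nat)
  (V0 : 'rV[R]_k -> 'rV[R]_k) (V : 'I_k -> 'rV[R]_k -> 'rV[R]_k)
  (sigma : 'rV[R]_k -> 'rV[R]_k) (rho : R) :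
  smooth_vf V0 -> (forall i, smooth_vf (V i)) ->
  C1_map sigma ->
  has_ubound (range (sigma_norm V sigma)) ->
  (forall f : 'rV[R]_k -> R, smooth f ->
     forall p, rho * GammaL V0 V f p <= Gamma2L V0 V f p) ->
  forall f : 'rV[R]_k * 'rV[R]_k -> R, smooth f ->
  forall z : 'rV[R]_k * 'rV[R]_k,
    (rho - Csigma V sigma / 2) * Gamma V0 V sigma f z
      - Csigma V sigma / 2 * GammaZ f z <= Gamma2 V0 V sigma f z
    /\ 0 <= Gamma2Z V0 V sigma f z.
Proof.
move=> hV0 hV hs hub hyp f sf z.
split; last exact: (Gamma2Z_ge0 hV0 hV hs z sf).
case: z => p xi.
have H1 := hyp _ (smooth_tr xi sf) p.
rewrite (f_equal (fun h => h p) (GammaL_tr V0 V f xi)) (Gamma2L_tr V0 V f xi p) /= in H1.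
rewrite (GLp_eq V0 hV sf) in H1.
rewrite (Gamma_eq V0 sigma hV sf) (Gamma2_dec hV0 hV hs (p, xi) sf).
have E i : Zsig sigma (pact (V i) f) (p, xi) - pact (V i) (Zsig sigma f) (p, xi) =
   - \sum_(j < k) vf_act (V i) (Defs.comp sigma j) p * dxi j f (p, xi).
  exact: (comm hs (p, xi) (hV i) sf).
have -> : \sum_(i < k) pact (V i) f (p, xi) *
     (Zsig sigma (pact (V i) f) (p, xi) - pact (V i) (Zsig sigma f) (p, xi)) =
   - \sum_(i < k) pact (V i) f (p, xi) *
     (\sum_(j < k) vf_act (V i) (Defs.comp sigma j) p * dxi j f (p, xi)).
  by rewrite -sumrN; apply: eq_bigr => i _; rewrite E mulrN.
have K := @key_ineq R k (fun i => pact (V i) f (p, xi)) (fun j => dxi j f (p, xi))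
   (fun i j => vf_act (V i) (Defs.comp sigma j) p) (Csigma V sigma).
have sC : sigma_norm V sigma p <= Csigma V sigma.
  by apply: (ub_le_sup hub); exists p.
move: (K sC) => {K} K.
apply: final_alg => //.
Qed.
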